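(* For every constant-time one-sided error PACA $C$ there is a constant-time DACA $C'$ such that $L(C)=L(C')$.
   Context: A (bounded, one-dimensional) cellular automaton has a finite state set $Q$, a boundary symbol $\$\notin Q$, and a local transition function $\delta\colon Q_\$\times Q\times Q_\$\to Q$ ($Q_\$=Q\cup\{\$\}$); on $s=s_0\cdots s_{n-1}\in Q^n$, $\Delta(s)=\delta(\$,s_0,s_1)\,\delta(s_0,s_1,s_2)\cdots\delta(s_{n-2},s_{n-1},\$)$. A DACA is such a CA with input alphabet $\Sigma\subseteq Q$ and accepting states $A\subseteq Q$; it accepts $x\in\Sigma^+$ of length $n$ iff $\Delta^t(x)\in A^n$ for some $t\ge0$; it has time complexity $T$ if every accepted $x$ of length $n$ has such a $t<T(n)$. A PACA is the same except it has two local transition functions $\delta_0,\delta_1$ and at each step each cell independently tosses a fair coin $c$ and updates by $\delta_c$; a computation is accepting if at some step all cells are in $A$; it has time complexity $T$ if every accepting computation on an input of length $n$ first reaches $A^n$ at a step $<T(n)$. A one-sided error PACA for $L$ accepts every $x\in L$ with probability $\ge1/2$ and every $x\notin L$ with probability $0$; $L(C)=L$. Constant-time means time complexity bounded by a constant. *)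

(* Defs.v *)
From mathcomp Require Import all_boot all_order all_algebra.
Set Implicit Arguments. Unset Strict Implicit. Unset Printing Implicit Defensive.
Import Order.TTheory GRing.Theory Num.Theory.

(* The boundary symbol $ is [None]; Q_$ = option Q. *)

(* Synchronous update of a configuration [s]; cell i is updated by
   [f i (left neighbour) (own state) (right neighbour)]. *)
Definition local_step (Q : Type) (f : nat -> option Q -> Q -> option Q -> Q)
    (s : seq Q) : seq Q :=
  [seq f p.1.1.1 p.1.1.2 p.1.2 p.2
  | p <- zip (zip (zip (iota 0 (size s)) (None :: map Some s)) s)
             (rcons (map Some (behead s)) None)].

(* Deterministic CA acceptor.  The input alphabet Sigma is a subset of the
   state set, given by an injective embedding. *)
Record DACA (Sigma : finType) := {
  dQ : finType;
  dinput : Sigma -> dQ;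
  dinput_inj : injective dinput;
  ddelta : option dQ -> dQ -> option dQ -> dQ;
  dacc : pred dQ }.

Definition daca_Delta Sigma (C : DACA Sigma) : seq (dQ C) -> seq (dQ C) :=
  local_step (fun _ => @ddelta _ C).

Definition daca_conf Sigma (C : DACA Sigma) (x : seq Sigma) (t : nat) :=
  iter t (@daca_Delta _ C) (map (@dinput _ C) x).

Definition daca_acc_at Sigma (C : DACA Sigma) (x : seq Sigma) (t : nat) : bool :=
  all (@dacc _ C) (daca_conf C x t).

Definition daca_accepts Sigma (C : DACA Sigma) (x : seq Sigma) : Prop :=
  0 < size x /\ exists t, daca_acc_at C x t.

Definition daca_const_time Sigma (C : DACA Sigma) : Prop :=
  exists T : nat, forall x : seq Sigma, daca_accepts C x ->
    exists t, t < T /\ daca_acc_at C x t.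

(* Probabilistic CA acceptor: two local rules; a cell whose coin is
   [false] (0) uses pdelta0, [true] (1) uses pdelta1. *)
Record PACA (Sigma : finType) := {
  pQ : finType;
  pinput : Sigma -> pQ;
  pinput_inj : injective pinput;
  pdelta0 : option pQ -> pQ -> option pQ -> pQ;
  pdelta1 : option pQ -> pQ -> option pQ -> pQ;
  pacc : pred pQ }.

Definition paca_step Sigma (C : PACA Sigma) (c : nat -> bool)
    : seq (pQ C) -> seq (pQ C) :=
  local_step (fun i => if c i then @pdelta1 _ C else @pdelta0 _ C).

(* A computation is determined by the coin outcomes [coins t i] of cell i
   at step t; configuration after t steps. *)
Fixpoint paca_conf Sigma (C : PACA Sigma) (x : seq Sigma)
    (coins : nat -> nat -> bool) (t : nat) : seq (pQ C) :=
  match t with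
  | 0 => map (@pinput _ C) x
  | t'.+1 => @paca_step _ C (coins t') (paca_conf C x coins t')
  end.

Definition paca_acc_at Sigma (C : PACA Sigma) (x : seq Sigma)
    (coins : nat -> nat -> bool) (t : nat) : bool :=
  all (@pacc _ C) (paca_conf C x coins t).

Definition paca_const_time Sigma (C : PACA Sigma) : Prop :=
  exists T : nat, forall (x : seq Sigma) (coins : nat -> nat -> bool) (t : nat),
    0 < size x -> paca_acc_at C x coins t ->
    (forall s, s < t -> ~~ paca_acc_at C x coins s) -> t < T.

Definition coins_of (t n : nat) (w : {ffun 'I_t * 'I_n -> bool})
    : nat -> nat -> bool :=
  fun s i => match @insub _ (fun k => k < t) 'I_t s,
                   @insub _ (fun k => k < n) 'I_n i with
             | Some s', Some i' => w (s', i')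
             | _, _ => false
             end.

(* Probability that the computation accepts within t steps
   (i.e. reaches A^n at some step s <= t); only coins of steps < t matter. *)
Definition paca_prob_within Sigma (C : PACA Sigma) (x : seq Sigma) (t : nat)
    : rat :=
  (#|[set w : {ffun 'I_t * 'I_(size x) -> bool} |
      [exists s : 'I_t.+1, paca_acc_at C x (coins_of w) s]]|%:R
   / #|{: {ffun 'I_t * 'I_(size x) -> bool}}|%:R)%R.

(* The acceptance probability is the supremum over t of paca_prob_within
   (continuity from below of the coin-sequence measure).
   "Pr >= 1/2" : every r < 1/2 is exceeded by some paca_prob_within;
   "Pr = 0"    : all paca_prob_within vanish. *)
Definition one_sided_for Sigma (C : PACA Sigma) (L : seq Sigma -> Prop) : Prop :=
  forall x : seq Sigma, 0 < size x ->
    (L x -> forall r : rat, (r < 1 / 2)%R ->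
              exists t, (r < paca_prob_within C x t)%R) /\
    (~ L x -> forall t, paca_prob_within C x t = 0%R).

(* Main.v *)
Require Import Defs.
From mathcomp Require Import all_boot all_order all_algebra.
From mathcomp Require Import zify ring lra.
From Stdlib Require Import Classical ClassicalEpsilon.
Set Implicit Arguments. Unset Strict Implicit. Unset Printing Implicit Defensive.
Import Order.TTheory GRing.Theory Num.Theory.

Section Count.
Variable X : finType.

Definition mrg (D : pred X) (u v : {ffun X -> bool}) : {ffun X -> bool} :=
  [ffun x => if D x then u x else v x].

Lemma split_count (D : pred X) (P Q : pred {ffun X -> bool}) :
  (forall w1 w2 : {ffun X -> bool}, (forall x, D x -> w1 x = w2 x) -> P w1 = P w2) ->
  (forall w1 w2 : {ffun X -> bool}, (forall x, ~~ D x -> w1 x = w2 x) -> Q w1 = Q w2) ->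
  #|[pred w | P w && Q w]| * #|{: {ffun X -> bool}}| = #|P| * #|Q|.
Proof.
move=> HP HQ.
pose phi (p : {ffun X -> bool} * {ffun X -> bool}) := (mrg D p.1 p.2, mrg D p.2 p.1).
have phiK : cancel phi phi.
  move=> [u v]; rewrite /phi /=; congr pair; apply/ffunP => x; rewrite !ffunE;
  by case: (D x).
have inj := can_inj phiK.
have -> : #|P| * #|Q| = #|setX [set w in P] [set w in Q]| by rewrite cardsX !cardsE.
have -> : setX [set w in P] [set w in Q] =
          phi @^-1: setX [set w in [pred w | P w && Q w]] setT.
  apply/setP => [[u v]]; rewrite !inE /=.
  have e1 : P (mrg D u v) = P u by apply: HP => x hx; rewrite ffunE hx.
  have e2 : Q (mrg D u v) = Q v by apply: HQ => x hx; rewrite ffunE (negbTE hx).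
  by rewrite e1 e2 andbT.
by rewrite card_preimset // cardsX cardsE cardsT.
Qed.

Lemma fail_count (D : {set X}) (F : pred {ffun X -> bool}) w0 :
  (forall w1 w2 : {ffun X -> bool}, (forall x, x \in D -> w1 x = w2 x) -> F w1 = F w2) -> F w0 ->
  #|{: {ffun X -> bool}}| <= #|F| * 2 ^ #|D|.
Proof.
move=> HF F0.
pose Q := [pred w : {ffun X -> bool} | [forall x, (x \notin D) ==> (w x == w0 x)]].
have HQ : forall w1 w2 : {ffun X -> bool}, (forall x, ~~ (x \in D) -> w1 x = w2 x) -> Q w1 = Q w2.
  move=> w1 w2 h; apply/forallP/forallP => hh x; have := hh x;
  by case hx: (x \in D) => //=; rewrite h ?hx.
have := @split_count (fun x => x \in D) F Q HF HQ.
have h1 : 0 < #|[pred w | F w && Q w]|.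
  apply/card_gt0P; exists w0; rewrite inE /= F0 /=; apply/forallP => x; exact/implyP.
have h2 : #|Q| <= 2 ^ #|D|.
  rewrite -card_powerset.
  have -> : #|Q| = #|[set [set x in D | w x] | w : {ffun X -> bool} in Q]|.
    rewrite card_in_imset // => w1 w2 q1 q2 e; apply/ffunP => x.
    case hx: (x \in D).
      by move/setP: e => /(_ x); rewrite !inE hx.
    move/forallP: q1 => /(_ x); move/forallP: q2 => /(_ x).
    by rewrite hx /= => /eqP -> /eqP ->.
  apply: subset_leq_card; apply/subsetP => A /imsetP [w _ ->].
  by rewrite inE; apply/subsetP => x; rewrite inE => /andP [].
move=> e; apply: (@leq_trans (#|[pred w | F w && Q w]| * #|{: {ffun X -> bool}}|)).
  exact: leq_pmull.
by rewrite e leq_mul2l h2 orbT.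
Qed.

Lemma union_bound (T : finType) m (P : nat -> pred T) (E : pred T) :
  (forall w, E w -> exists2 s, s < m & P s w) ->
  #|E| <= \sum_(s < m) #|P s|.
Proof.
elim: m E => [|m IH] E H.
  rewrite big_ord0 leqn0; apply/eqP/eq_card0 => w; apply/negP => /H [s]; lia.
rewrite big_ord_recr /=.
apply: (@leq_trans #|[predU [pred w | E w && ~~ P m w] & P m]|).
  apply: subset_leq_card; apply/subsetP => w hw; rewrite !inE /=.
  have hw' : E w := hw; rewrite (_ : (w \in P m) = P m w) // hw'.
  by case: (P m w).
apply: leq_trans (leq_addr #|[predI [pred w | E w && ~~ P m w] & P m]| _) _.
rewrite cardUI leq_add2r.
apply: IH => w /andP [/H [s hs Ps] nP].
exists s => //; move: hs; rewrite ltnS leq_eqVlt => /orP [/eqP e|//].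
by move: nP; rewrite -e Ps.
Qed.

Lemma card_interval n (A : {pred 'I_n}) lo m :
  (forall k, k \in A -> lo <= k < lo + m) -> #|A| <= m.
Proof.
move=> H; rewrite cardE -(size_map val).
rewrite -[m](size_iota lo); apply: uniq_leq_size.
  by rewrite map_inj_uniq ?enum_uniq //; exact: val_inj.
move=> y /mapP [k]; rewrite mem_enum => /H hk ->; by rewrite mem_iota.
Qed.

End Count.

Lemma size_local_step Q (f : nat -> option Q -> Q -> option Q -> Q) s :
  size (local_step f s) = size s.
Proof.
rewrite /local_step size_map !size_zip size_iota /= size_map size_rcons size_map size_behead.
case: s => [|a s] //=; lia.
Qed.

Lemma nth_zip_lt (S T : Type) (p : S * T) (s : seq S) (t : seq T) i :
  i < size s -> i < size t -> nth p (zip s t) i = (nth p.1 s i, nth p.2 t i).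
Proof. by move=> h1 h2; rewrite nth_zip_cond size_zip leq_min h1 h2. Qed.

Lemma nth_local_step Q (f : nat -> option Q -> Q -> option Q -> Q) s d i :
  i < size s ->
  nth d (local_step f s) i =
  f i (if i is j.+1 then Some (nth d s j) else None) (nth d s i)
      (if i.+1 < size s then Some (nth d s i.+1) else None).
Proof.
move=> hi.
have e1 : size (None :: map Some s) = (size s).+1 by rewrite /= size_map.
have e2 : size (rcons (map Some (behead s)) None) = (size s).-1.+1
  by rewrite size_rcons size_map size_behead.
have hz : i < size (zip (zip (zip (iota 0 (size s)) (None :: map Some s)) s)
             (rcons (map Some (behead s)) None)).
  rewrite !size_zip size_iota e1 e2; lia.
rewrite /local_step (nth_map (0, None, d, None)) //.
rewrite nth_zip_lt; last (by rewrite e2; lia); last by rewrite !size_zip size_iota e1; lia.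
rewrite nth_zip_lt //; last by rewrite !size_zip size_iota e1; lia.
rewrite nth_zip_lt ?size_iota ?e1 //; last by lia.
rewrite /= nth_iota // add0n; congr f.
- by case: i hi {hz} => [|j] //= hj; rewrite (nth_map d) //; lia.
- rewrite nth_rcons size_map size_behead.
  case: (ltnP i (size s).-1) => h3.
    rewrite (nth_map d) ?size_behead // nth_behead.
    by have -> : i.+1 < size s by lia.
  have -> : (i.+1 < size s) = false by lia.
  by have -> : i == (size s).-1 by lia.
Qed.

Local Open Scope ring_scope.

Section St.
Variables (Sigma : finType) (C : PACA Sigma).

Fixpoint st (inp : int -> option Sigma) (c : nat -> int -> bool) (s : nat) (z : int)
  : option (pQ C) :=
  match s with
  | 0%N => omap (@pinput _ C) (inp z)
  | s'.+1 => match st inp c s' z with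
     | None => None
     | Some q => Some ((if c s' z then @pdelta1 _ C else @pdelta0 _ C)
                        (st inp c s' (z - 1)) q (st inp c s' (z + 1)))
     end
  end.

Lemma st_None inp c s z : (st inp c s z == None) = (inp z == None).
Proof.
elim: s z => [|s IH] z /=; first by case: (inp z).
by case: (st inp c s z) (IH z) => [q|] /= <-.
Qed.

End St.

Section St2.
Variables (Sigma : finType) (C : PACA Sigma).
Lemma st_coins inp c c' s z :
  (forall u y, (u < s)%N -> inp y != None -> z - s%:Z < y -> y < z + s%:Z -> c u y = c' u y) ->
  st C inp c s z = st C inp c' s z.
Proof.
elim: s z => [|s IH] z H //=.
rewrite -IH; last by move=> u y hu hy h1 h2; apply: H => //; lia.
case E: (st C inp c s z) => [q|] //.
have hz : inp z != None by rewrite -(st_None C inp c s) E.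
rewrite (H s z) //; last (by lia); last by lia.
rewrite (IH (z - 1)); last by move=> u y hu hy h1 h2; apply: H => //; lia.
rewrite (IH (z + 1)); last by move=> u y hu hy h1 h2; apply: H => //; lia.
by [].
Qed.

Lemma st_local inp inp' c s z :
  (forall y, z - s%:Z <= y -> y <= z + s%:Z -> inp y = inp' y) ->
  st C inp c s z = st C inp' c s z.
Proof.
elim: s z => [|s IH] z H /=; first by rewrite H; [|lia|lia].
rewrite -IH; last by move=> y h1 h2; apply: H; lia.
case E: (st C inp c s z) => [q|] //.
rewrite (IH (z - 1)); last by move=> y h1 h2; apply: H; lia.
rewrite (IH (z + 1)); last by move=> y h1 h2; apply: H; lia.
by [].
Qed.

Lemma st_shift inp c s z a :
  st C (fun y => inp (y + a)) c s z = st C inp (fun u y => c u (y - a)) s (z + a).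
Proof.
elim: s z => [|s IH] z //=.
rewrite IH; case: (st C inp _ s (z + a)) => [q|] //.
rewrite addrK IH IH.
have -> : z - 1 + a = z + a - 1 by lia.
by have -> : z + 1 + a = z + a + 1 by lia.
Qed.

Definition inpx (x : seq Sigma) (z : int) : option Sigma :=
  if 0 <= z then nth None (map Some x) `|z|%N else None.

Lemma st_paca x (coins : nat -> nat -> bool) (c : nat -> int -> bool) d :
  (forall u k, c u (Posz k) = coins u k) ->
  forall s, size (paca_conf C x coins s) = size x /\
    forall k, (k < size x)%N -> st C (inpx x) c s (Posz k) = Some (nth d (paca_conf C x coins s) k).
Proof.
move=> Hc; elim=> [|s [IHs IH]] /=.
  split; first by rewrite size_map.
  move=> k hk; have [a _] : exists a : Sigma, True by case: (x) hk => [|a ?] //; exists a. by rewrite /inpx /= (nth_map a) // (nth_map a).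
rewrite /paca_step size_local_step IHs; split => // k hk.
rewrite nth_local_step ?IHs // IH // Hc.
congr Some.
have E1 : st C (inpx x) c s (Posz k - 1) =
   (if k is j.+1 then Some (nth d (paca_conf C x coins s) j) else None).
  case: k hk => [|j] hj.
    by apply/eqP; rewrite (st_None C (inpx x) c s).
  have -> : Posz j.+1 - 1 = Posz j by lia.
  rewrite IH //; lia.
have E2 : st C (inpx x) c s (Posz k + 1) =
   (if (k.+1 < size x)%N then Some (nth d (paca_conf C x coins s) k.+1) else None).
  have -> : Posz k + 1 = Posz k.+1 by lia.
  case: ifP => h; first by rewrite IH.
  apply/eqP; rewrite (st_None C (inpx x) c s) /inpx /= nth_default // size_map; lia.
by rewrite E1 E2.
Qed.
End St2.
Local Open Scope ring_scope.

Section Q.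
Variables (Sigma : finType) (C : PACA Sigma) (T : nat).

Definition Kc : nat := (T * (2 * T))%N.
Definition aa : nat := (2 ^ Kc)%N.
Definition m0 : nat := (aa * (4 * T))%N.
Definition Rr : nat := (4 * T * m0)%N.
Definition Ww : nat := (Rr + T)%N.

Definition acc_cell inp c s z : bool :=
  if st C inp c s z is Some q then @pacc _ C q else true.

Definition bad inp s z : Prop := exists c, ~~ acc_cell inp c s z.

Definition sat inp s (lo hi : int) : Prop :=
  exists c, forall z, lo <= z -> z <= hi -> bad inp s z -> acc_cell inp c s z.

Definition sep inp s (lo hi : int) : Prop :=
  exists e : nat -> int,
    (forall j, (j < m0)%N -> [/\ lo <= e j, e j <= hi & bad inp s (e j)]) /\
    (forall j, (j.+1 < m0)%N -> e j + (2 * T)%N%:Z <= e j.+1).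

Definition Qc inp s (z0 : int) : Prop :=
  ~ sep inp s (z0 - Rr%:Z) (z0 + Rr%:Z) /\ sat inp s (z0 - Rr%:Z) (z0 + Rr%:Z).

Lemma bad_some inp s z : bad inp s z -> inp z != None.
Proof.
move=> [c]; apply: contraNneq => h.
rewrite /acc_cell; have /eqP -> // : st C inp c s z == None.
by rewrite st_None h.
Qed.

Lemma acc_coins inp c c' s z :
  (forall u y, (u < s)%N -> inp y != None -> z - s%:Z < y -> y < z + s%:Z -> c u y = c' u y) ->
  acc_cell inp c s z = acc_cell inp c' s z.
Proof. by move=> h; rewrite /acc_cell (st_coins C h). Qed.

Lemma Qc_local1 inp inp' s z0 : (s <= T)%N ->
  (forall y, z0 - Ww%:Z <= y -> y <= z0 + Ww%:Z -> inp y = inp' y) ->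
  Qc inp s z0 -> Qc inp' s z0.
Proof.
move=> hs H.
have Ha : forall c z, z0 - Rr%:Z <= z -> z <= z0 + Rr%:Z ->
    acc_cell inp c s z = acc_cell inp' c s z.
  move=> c z h1 h2; rewrite /acc_cell (@st_local _ C inp inp' c s z) //.
  move=> y h3 h4; apply: H; rewrite /Ww; lia.
have Hb : forall z, z0 - Rr%:Z <= z -> z <= z0 + Rr%:Z -> bad inp s z <-> bad inp' s z.
  move=> z h1 h2; split=> [[c hc]|[c hc]]; exists c; by rewrite ?(Ha c z) // -?(Ha c z).
move=> [hsep [c hc]]; split.
  move=> [e [he1 he2]]; apply: hsep; exists e; split => // j hj.
  by case: (he1 j hj) => h1 h2 h3; split => //; apply/Hb.
exists c => z h1 h2 hb; rewrite -Ha //; apply: hc => //; exact/Hb.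
Qed.

Lemma Qc_local inp inp' s z0 : (s <= T)%N ->
  (forall y, z0 - Ww%:Z <= y -> y <= z0 + Ww%:Z -> inp y = inp' y) ->
  Qc inp s z0 <-> Qc inp' s z0.
Proof.
move=> hs H; split; apply: Qc_local1 => // y h1 h2; by rewrite H.
Qed.

Lemma acc_shift inp c s z a :
  acc_cell (fun y => inp (y + a)) c s z = acc_cell inp (fun u y => c u (y - a)) s (z + a).
Proof. by rewrite /acc_cell (st_shift C). Qed.

Lemma bad_shift inp s z a : bad (fun y => inp (y + a)) s z <-> bad inp s (z + a).
Proof.
split=> [[c hc]|[c hc]].
  by exists (fun u y => c u (y - a)); rewrite -acc_shift.
exists (fun u y => c u (y + a)); rewrite acc_shift.
rewrite (@acc_coins _ _ c) // => u y _ _ _ _; by rewrite subrK.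
Qed.

Lemma Qc_shift inp s z0 a :
  Qc (fun y => inp (y + a)) s z0 <-> Qc inp s (z0 + a).
Proof.
split.
- move=> [hsep [c hc]]; split.
    move=> [e [he1 he2]]; apply: hsep; exists (fun j => e j - a); split.
      move=> j hj; case: (he1 j hj) => h1 h2 h3; split; try lia.
      by apply/bad_shift; rewrite subrK.
    move=> j hj; have := he2 j hj; lia.
  exists (fun u y => c u (y - a)) => z h1 h2 hb.
  have := hc (z - a); rewrite acc_shift subrK; apply; try lia.
  by apply/bad_shift; rewrite subrK.
- move=> [hsep [c hc]]; split.
    move=> [e [he1 he2]]; apply: hsep; exists (fun j => e j + a); split.
      move=> j hj; case: (he1 j hj) => h1 h2 h3; split; try lia.
      exact/bad_shift.
    move=> j hj; have := he2 j hj; lia.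
  exists (fun u y => c u (y + a)) => z h1 h2 hb.
  rewrite acc_shift (@acc_coins _ _ c) ?hc //; try lia.
    exact/bad_shift.
  by move=> u y _ _ _ _; rewrite subrK.
Qed.

End Q.
Local Open Scope ring_scope.

Lemma coins_ofE t n (w : {ffun 'I_t * 'I_n -> bool}) u k (hu : (u < t)%N) (hk : (k < n)%N) :
  coins_of w u k = w (Ordinal hu, Ordinal hk).
Proof. by rewrite /coins_of !insubT. Qed.

Lemma bern b m : (b ^ m * (b + 1 + m) <= (b + 1) ^ m.+1)%N.
Proof.
elim: m => [|m IH]; first by rewrite expn0 expn1 mul1n addn0.
rewrite expnS [((b+1) ^ m.+2)%N]expnS.
move: IH; set P := (b ^ m)%N; set Qp := ((b + 1) ^ m.+1)%N => IH.
have h := leq_mul IH (leqnn (b + 1)).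
nia.
Qed.

Section Prob.
Variables (Sigma : finType) (C : PACA Sigma) (T : nat) (x : seq Sigma).

Definition cw t (w : {ffun 'I_t * 'I_(size x) -> bool}) : nat -> int -> bool :=
  fun u y => coins_of w u `|y|%N.

Lemma inpx_some y : inpx x y != None -> 0 <= y /\ (`|y| < size x)%N.
Proof.
rewrite /inpx; case: ifP => // h1; split => //.
by move: H; apply: contraNT; rewrite -leqNgt => h; rewrite nth_default // size_map.
Qed.

Lemma size_conf coins s : size (paca_conf C x coins s) = size x.
Proof.
elim: s => [|s IH] /=; first by rewrite size_map.
by rewrite /paca_step size_local_step.
Qed.

Lemma acc_all (coins : nat -> nat -> bool) (c : nat -> int -> bool) s :
  (forall u k, c u (Posz k) = coins u k) ->
  paca_acc_at C x coins s <->
  (forall k, (k < size x)%N -> acc_cell C (inpx x) c s (Posz k)).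
Proof.
move=> Hc; case Ex: x => [|a x'].
  rewrite /paca_acc_at; split=> // _.
  have := size_conf coins s; rewrite Ex => /size0nil ->; done.
rewrite -Ex; have [Hsz Hn] := @st_paca _ C x _ _ (pinput C a) Hc s.
rewrite /paca_acc_at; split.
  move/(all_nthP (pinput C a)) => h k hk; rewrite /acc_cell Hn //; apply: h; by rewrite Hsz.
move=> h; apply/(all_nthP (pinput C a)) => k; rewrite Hsz => hk.
by have := h k hk; rewrite /acc_cell Hn.
Qed.

Lemma cone_dep t s z (w1 w2 : {ffun 'I_t * 'I_(size x) -> bool}) : (s <= t)%N ->
  (forall p : 'I_t * 'I_(size x), (p.1 < s)%N -> z - s%:Z < Posz p.2 -> Posz p.2 < z + s%:Z ->
     w1 p = w2 p) ->
  acc_cell C (inpx x) (cw w1) s z = acc_cell C (inpx x) (cw w2) s z.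
Proof.
move=> hst H; apply: acc_coins => u y hu hy h1 h2.
have [y0 yn] := inpx_some hy.
have hut : (u < t)%N by lia.
rewrite /cw !(coins_ofE _ hut yn); apply: H => /=; lia.
Qed.

Lemma card_cone t s (z : int) : 0 <= z ->
  (#|[set p : 'I_t * 'I_(size x) | [&& (p.1 < s)%N, (z - s%:Z < Posz p.2)%R & (Posz p.2 < z + s%:Z)%R]]|
    <= s * (2 * s))%N.
Proof.
move=> z0.
apply: (@leq_trans #|setX [set u : 'I_t | (u < s)%N] [set k : 'I_(size x) | (z - s%:Z < Posz k)%R && (Posz k < z + s%:Z)%R]|).
  apply: subset_leq_card; apply/subsetP => [[u k]]; rewrite !inE /= => /and3P [-> -> ->] //.
rewrite cardsX leq_mul //.
  apply: (@card_interval _ _ 0) => k; rewrite inE; lia.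
apply: (@card_interval _ _ ((absz z).+1 - s)%N) => k; rewrite inE; lia.
Qed.

Lemma bad_fail t s z : (s <= t)%N -> (s <= T)%N -> bad C (inpx x) s z ->
  (#|{: {ffun 'I_t * 'I_(size x) -> bool}}| <=
     #|[pred w : {ffun 'I_t * 'I_(size x) -> bool} | ~~ acc_cell C (inpx x) (cw w) s z]| * aa T)%N.
Proof.
move=> hst hsT hb; have [z0 zn] := inpx_some (bad_some hb).
case: hb => c hc.
pose D := [set p : 'I_t * 'I_(size x) | [&& (p.1 < s)%N, (z - s%:Z < Posz p.2)%R & (Posz p.2 < z + s%:Z)%R]].
pose w0 : {ffun 'I_t * 'I_(size x) -> bool} := [ffun p : 'I_t * 'I_(size x) => c (val p.1) (Posz (val p.2))].
apply: leq_trans (@fail_count _ D [pred w : {ffun 'I_t * 'I_(size x) -> bool} | ~~ acc_cell C (inpx x) (cw w) s z] w0 _ _) _.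
- move=> w1 w2 h; rewrite /= (@cone_dep t s z w1 w2) // => p h1 h2 h3.
  by apply: h; rewrite inE h1 h2 h3.
- rewrite /= (@acc_coins _ C _ _ c) // => u y hu hy h1 h2.
  have [y0 yn] := inpx_some hy.
  have hut : (u < t)%N by lia.
  rewrite /cw (coins_ofE _ hut yn) ffunE /=; congr c; lia.
rewrite leq_mul2l; apply/orP; right; rewrite /aa leq_pexp2l //.
apply: leq_trans (card_cone t s z0) _; rewrite /Kc; nia.
Qed.

Lemma mono_e (e : nat -> int) m (d : nat) :
  (forall j, (j.+1 < m)%N -> e j + d%:Z <= e j.+1) ->
  forall i j, (i <= j)%N -> (j < m)%N -> e i + ((j - i) * d)%N%:Z <= e j.
Proof.
move=> H i j hij; elim: j hij => [|j IH] hij hj.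
  have -> : i = 0%N by lia.
  rewrite subn0 mul0n addr0; lia.
case: (ltnP i j.+1) => h.
  have := IH (ltnSE h) (ltnW hj); have := H j hj.
  have -> : ((j.+1 - i) * d = (j - i) * d + d)%N by rewrite subSn ?mulSn 1?addnC //; lia.
  lia.
have -> : i = j.+1 by lia.
rewrite subnn mul0n addr0; lia.
Qed.

Lemma sep_count t s (e : nat -> int) m : (s <= t)%N -> (s <= T)%N ->
  (forall j, (j < m)%N -> bad C (inpx x) s (e j)) ->
  (forall j, (j.+1 < m)%N -> e j + (2 * T)%N%:Z <= e j.+1) ->
  (#|[pred w : {ffun 'I_t * 'I_(size x) -> bool} |
        [forall j : 'I_m, acc_cell C (inpx x) (cw w) s (e j)]]| * aa T ^ m
     <= (aa T - 1) ^ m * #|{: {ffun 'I_t * 'I_(size x) -> bool}}|)%N.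
Proof.
move=> hst hsT; elim: m => [|m IH] Hb Hg.
  rewrite !expn0 mul1n muln1; apply: subset_leq_card; apply/subsetP => w _.
  by rewrite inE.
set Nn := #|{: {ffun 'I_t * 'I_(size x) -> bool}}|.
pose P := [pred w : {ffun 'I_t * 'I_(size x) -> bool} |
        [forall j : 'I_m, acc_cell C (inpx x) (cw w) s (e j)]].
pose Q := [pred w : {ffun 'I_t * 'I_(size x) -> bool} | acc_cell C (inpx x) (cw w) s (e m)].
have -> : #|[pred w : {ffun 'I_t * 'I_(size x) -> bool} |
        [forall j : 'I_m.+1, acc_cell C (inpx x) (cw w) s (e j)]]| = #|[pred w | P w && Q w]|.
  apply: eq_card => w; rewrite !inE /=; apply/forallP/andP.
    move=> h; split; last exact: (h ord_max).
    by apply/forallP => j; exact: (h (widen_ord (leqnSn m) j)).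
  move=> [/forallP h1 h2] j; case: (ltnP j m) => hj.
    exact: (h1 (Ordinal hj)).
  by have -> : (nat_of_ord j) = m by move: (ltn_ord j); lia.
have IH' := IH (fun j hj => Hb j (ltnW hj)) (fun j hj => Hg j (ltnW hj)).
have Hbm := Hb m (ltnSn m).
have [em0 emn] := inpx_some (bad_some Hbm).
have [cut [hc1 hc2]] : exists cut : nat,
   (forall j (y : nat), (j < m)%N -> y%:Z < e j + s%:Z -> (y < cut)%N) /\
   (forall y : nat, e m - s%:Z < y%:Z -> (cut <= y)%N).
  clear IH IH' P Q Hbm em0 emn.
  case: m Hb Hg => [|m] Hb Hg; first by exists 0%N; split.
  have hm : (m < m.+2)%N by lia.
  have [ej0 ejn] := inpx_some (bad_some (Hb m hm)).
  have ea : Posz `|e m|%N = e m by rewrite gez0_abs.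
  exists (`|e m| + T)%N; split.
    move=> j y hj hy; have := @mono_e e m.+2 (2 * T) Hg j m.
    move=> /(_ (ltnSE hj) hm); set d := ((m - j) * (2 * T))%N => hd.
    have : (0 <= d)%N by []. lia.
  move=> y hy; have := Hg m (ltnSn _); lia.
have HP : forall w1 w2 : {ffun 'I_t * 'I_(size x) -> bool},
    (forall p : 'I_t * 'I_(size x), (p.2 < cut)%N -> w1 p = w2 p) -> P w1 = P w2.
  move=> w1 w2 h; apply: eq_forallb => j.
  rewrite (@cone_dep t s (e j) w1 w2) // => p h1 h2 h3; apply: h.
  exact: (hc1 j).
have HQ : forall w1 w2 : {ffun 'I_t * 'I_(size x) -> bool},
    (forall p : 'I_t * 'I_(size x), ~~ (p.2 < cut)%N -> w1 p = w2 p) -> Q w1 = Q w2.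
  move=> w1 w2 h; rewrite /Q /= (@cone_dep t s (e m) w1 w2) // => p h1 h2 h3; apply: h.
  by rewrite -leqNgt; apply: hc2.
have eqPQ : (#|[pred w | P w && Q w]| * Nn = #|P| * #|Q|)%N.
  exact: (@split_count _ (fun p : 'I_t * 'I_(size x) => (p.2 < cut)%N) P Q HP HQ).
have hF := bad_fail hst hsT Hbm.
have hC : (#|Q| + #|[pred w : {ffun 'I_t * 'I_(size x) -> bool} |
        ~~ acc_cell C (inpx x) (cw w) s (e m)]| = Nn)%N.
  transitivity (#|Q| + #|[predC Q]|)%N; last exact: cardC.
  congr addn; apply: eq_card => w; by rewrite !inE.
have hQ : (#|Q| * aa T <= (aa T - 1) * Nn)%N.
  move: hF hC; rewrite -/Nn; move=> hF hC; nia.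
have hN : (0 < Nn)%N.
  by apply/card_gt0P; exists [ffun => false].
rewrite -(leq_pmul2r hN) expnS [((aa T - 1) ^ m.+1)%N]expnS.
have := leq_mul IH' hQ.
have E1 : (#|[pred w | P w && Q w]| * (aa T * aa T ^ m) * Nn =
           #|P| * aa T ^ m * (#|Q| * aa T))%N.
  rewrite -(mulnC Nn) !mulnA (mulnC Nn) eqPQ; ring.
rewrite E1; move/leq_trans; apply; rewrite leq_eqVlt; apply/orP; left; apply/eqP; ring.
Qed.

Lemma cwE t (w : {ffun 'I_t * 'I_(size x) -> bool}) u k : cw w u (Posz k) = coins_of w u k.
Proof. by []. Qed.

Lemma sep_bound t s lo hi : (s <= t)%N -> (s <= T)%N ->
  sep C T (inpx x) s lo hi ->
  (#|[pred w : {ffun 'I_t * 'I_(size x) -> bool} | paca_acc_at C x (coins_of w) s]| * (4 * T + 1)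
     <= #|{: {ffun 'I_t * 'I_(size x) -> bool}}|)%N.
Proof.
move=> hst hsT [e [he1 he2]].
set Nn := #|{: {ffun 'I_t * 'I_(size x) -> bool}}|.
have hb : forall j, (j < m0 T)%N -> bad C (inpx x) s (e j) by move=> j /he1 [].
have := sep_count hst hsT hb he2.
have hsub : (#|[pred w : {ffun 'I_t * 'I_(size x) -> bool} | paca_acc_at C x (coins_of w) s]| <=
   #|[pred w : {ffun 'I_t * 'I_(size x) -> bool} |
        [forall j : 'I_(m0 T), acc_cell C (inpx x) (cw w) s (e j)]]|)%N.
  apply: subset_leq_card; apply/subsetP => w; rewrite !inE /=.
  move/(acc_all s (@cwE t w)) => h; apply/forallP => j.
  have [ej0 ejn] := inpx_some (bad_some (hb j (ltn_ord j))).
  have := h _ ejn; by rewrite gez0_abs.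
have ha : (0 < aa T)%N by rewrite /aa expn_gt0.
have hbern := bern (aa T - 1) (m0 T).
rewrite subnK // in hbern.
have hb2 : ((aa T - 1) ^ m0 T * (4 * T + 1) <= aa T ^ m0 T)%N.
  rewrite -(leq_pmul2r ha) -expnSr; apply: leq_trans hbern.
  rewrite /m0 -mulnA leq_mul2l; apply/orP; right; nia.
move=> hc.
have hpos : (0 < aa T ^ m0 T)%N by rewrite expn_gt0 ha.
rewrite -(leq_pmul2r hpos).
apply: (@leq_trans (#|[pred w : {ffun 'I_t * 'I_(size x) -> bool} |
        [forall j : 'I_(m0 T), acc_cell C (inpx x) (cw w) s (e j)]]| * aa T ^ m0 T * (4 * T + 1))%N).
  by rewrite mulnAC; apply: leq_mul => //; apply: leq_mul.
apply: (@leq_trans ((aa T - 1) ^ m0 T * Nn * (4 * T + 1))%N).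
  by rewrite leq_mul2r hc orbT.
by rewrite mulnAC mulnC leq_mul2l hb2 orbT.
Qed.

Lemma unsat_zero t s lo hi :
  ~ sat C (inpx x) s lo hi ->
  #|[pred w : {ffun 'I_t * 'I_(size x) -> bool} | paca_acc_at C x (coins_of w) s]| = 0%N.
Proof.
move=> hns; apply/eq_card0 => w; apply/negP; rewrite inE /= => hw.
apply: hns; exists (cw w) => z h1 h2 hb.
have [z0 zn] := inpx_some (bad_some hb).
have := (proj1 (acc_all s (@cwE t w)) hw) _ zn; by rewrite gez0_abs.
Qed.

Lemma notQ_bound t s z0 : (s <= t)%N -> (s <= T)%N ->
  ~ Qc C T (inpx x) s z0 ->
  (#|[pred w : {ffun 'I_t * 'I_(size x) -> bool} | paca_acc_at C x (coins_of w) s]| * (4 * T + 1)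
     <= #|{: {ffun 'I_t * 'I_(size x) -> bool}}|)%N.
Proof.
move=> hst hsT hQ.
case: (classic (sep C T (inpx x) s (z0 - (Rr T)%:Z) (z0 + (Rr T)%:Z))) => hs.
  exact: sep_bound hs.
case: (classic (sat C (inpx x) s (z0 - (Rr T)%:Z) (z0 + (Rr T)%:Z))) => ht.
  by exfalso; apply: hQ.
by rewrite (@unsat_zero t s _ _ ht).
Qed.

Lemma prob_lt
  (HT : forall coins t, (0 < size x)%N -> paca_acc_at C x coins t ->
          (forall s, (s < t)%N -> ~~ paca_acc_at C x coins s) -> (t < T)%N)
  (H : forall s, (s < T)%N -> exists2 k : nat, (k < size x)%N & ~ Qc C T (inpx x) s k)
  (hx : (0 < size x)%N) t :
  paca_prob_within C x t < 1 / 4.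
Proof.
rewrite /paca_prob_within.
set E := [set w : {ffun 'I_t * 'I_(size x) -> bool} |
            [exists s : 'I_t.+1, paca_acc_at C x (coins_of w) s]].
set Nn := #|{: {ffun 'I_t * 'I_(size x) -> bool}}|.
pose P (s : nat) := [pred w : {ffun 'I_t * 'I_(size x) -> bool} |
                       (s <= t)%N && paca_acc_at C x (coins_of w) s].
have hE : (#|E| <= \sum_(s < T) #|P s|)%N.
  rewrite -(@eq_card _ [pred w | w \in E]) //.
  apply: (@union_bound _ T P [pred w | w \in E]) => w /=; rewrite inE => /existsP [s1 hs1].
  have exP : exists n, paca_acc_at C x (coins_of w) n by exists s1.
  case: (ex_minnP exP) => s0 h0 hmin.
  have hs0T : (s0 < T)%N.
    apply: (HT _ _ hx h0) => s hs; apply/negP => hs'.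
    by have := hmin s hs'; lia.
  exists s0 => //; rewrite /P /= h0 andbT.
  have := hmin _ hs1; have := ltn_ord s1; lia.
have hP : forall s : 'I_T, (#|P s| * (4 * T + 1) <= Nn)%N.
  move=> s; case: (leqP s t) => hst.
    have [k hk hQ] := H s (ltn_ord s).
    rewrite (@eq_card _ _ [pred w : {ffun 'I_t * 'I_(size x) -> bool} |
                 paca_acc_at C x (coins_of w) s]); last by move=> w; rewrite !inE /= hst.
    apply: (notQ_bound hst _ hQ); exact: ltnW (ltn_ord s).
  rewrite (@eq_card0 _ (P s)) //; move=> w; rewrite /P inE /=.
  by have -> : (s <= t)%N = false by lia.
have hS : ((\sum_(s < T) #|P s|) * (4 * T + 1) <= T * Nn)%N.
  rewrite big_distrl /=.
  apply: (@leq_trans (\sum_(s < T) Nn)); first by apply: leq_sum => s _; exact: hP.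
  by rewrite sum_nat_const card_ord.
have hN : (0 < Nn)%N by apply/card_gt0P; exists [ffun => false].
have h4 : (4 * #|E| < Nn)%N.
  have := leq_mul hE (leqnn (4 * T + 1)); move: hS; set S := (\sum_(s < T) _)%N.
  nia.
have hNr : (0 : rat) < Nn%:R by rewrite ltr0n.
rewrite ltr_pdivrMr //.
have : (4 * #|E|)%:R < Nn%:R :> rat by rewrite ltr_nat.
rewrite natrM; lra.
Qed.

End Prob.
Local Open Scope ring_scope.

Lemma fin_choice (Pj : nat -> int -> Prop) m :
  (forall j, (j < m)%N -> exists y, Pj j y) -> exists e : nat -> int, forall j, (j < m)%N -> Pj j (e j).
Proof.
elim: m => [|m IH] H; first by exists (fun _ => 0).
have [e he] := IH (fun j hj => H j (ltnW hj)).
have [y hy] := H m (ltnSn m).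
exists (fun j => if j == m then y else e j) => j hj.
case: eqP => [->//|hne]; apply: he; lia.
Qed.

Section Glob.
Variables (Sigma : finType) (C : PACA Sigma) (T : nat) (x : seq Sigma).

Lemma global_sat s : (0 < T)%N -> (s <= T)%N ->
  (forall k, (k < size x)%N -> Qc C T (inpx x) s (Posz k)) ->
  exists c, forall z, bad C (inpx x) s z -> acc_cell C (inpx x) c s z.
Proof.
move=> hT hsT HQ.
suff : forall p, (p <= size x)%N -> exists c, forall z, 0 <= z -> z < Posz p ->
         bad C (inpx x) s z -> acc_cell C (inpx x) c s z.
  move=> /(_ (size x) (leqnn _)) [c hc]; exists c => z hb.
  have [z0 zn] := inpx_some (bad_some hb); apply: hc => //.
  by rewrite -(gez0_abs z0) ltz_nat.
elim/ltn_ind => p IH hp.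
case: p IH hp => [|k] IH hp.
  by exists (fun _ _ => false) => z h1 h2; lia.
have [hsep [c2 hc2]] := HQ k hp.
case: (leqP k (Rr T)) => hkR.
  exists c2 => z h1 h2 hb; apply: hc2 => //; lia.
case: (classic (exists g : nat, [/\ (k.+1 - Rr T <= g)%N, (g + 2 * T <= k.+1)%N &
          forall y, Posz g <= y -> y < Posz (g + 2 * T) -> ~ bad C (inpx x) s y])).
  move=> [g [hg1 hg2 hg3]].
  have [c1 hc1] := IH g ltac:(lia) ltac:(lia).
  exists (fun u y => if y < Posz (g + T) then c1 u y else c2 u y) => z h1 h2 hb.
  case: (ltP z (Posz g)) => hzg.
    rewrite (@acc_coins _ C _ _ c1) ?hc1 // => u y hu hy hy1 hy2.
    by rewrite ifT //; lia.
  case: (ltP z (Posz (g + 2 * T))) => hzg2.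
    by exfalso; apply: (hg3 z) => //; lia.
  rewrite (@acc_coins _ C _ _ c2) ?hc2 //; try lia.
  move=> u y hu hy hy1 hy2; by rewrite ifF //; lia.
move=> hng; exfalso; apply: hsep.
have hex : forall j, (j < m0 T)%N -> exists y, 
    [/\ Posz (k.+1 - Rr T + 4 * T * j)%N <= y, y < Posz (k.+1 - Rr T + 4 * T * j + 2 * T)%N
      & bad C (inpx x) s y].
  move=> j hj.
  have hle : (k.+1 - Rr T + 4 * T * j + 2 * T <= k.+1)%N.
    have := leq_mul (leqnn (4 * T)) hj; move: hkR; rewrite /Rr; nia.
  apply: NNPP => hne; apply: hng.
  exists (k.+1 - Rr T + 4 * T * j)%N; split => //; first lia.
  move=> y h1 h2 hb; apply: hne; exists y; split => //.
have [e he] := fin_choice hex.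
exists e; split.
  move=> j hj; have [h1 h2 h3] := he j hj; split => //; have := leq_mul (leqnn (4 * T)) hj; move: hkR h1 h2; rewrite /Rr; nia.
move=> j hj; have [h1 h2 _] := he j (ltnW hj); have [h3 h4 _] := he j.+1 hj.
lia.
Qed.

End Glob.

Section Equiv.
Variables (Sigma : finType) (C : PACA Sigma) (T : nat) (L : seq Sigma -> Prop).
Hypothesis HT : forall (x : seq Sigma) coins t, (0 < size x)%N -> paca_acc_at C x coins t ->
          (forall s, (s < t)%N -> ~~ paca_acc_at C x coins s) -> (t < T)%N.
Hypothesis Hone : one_sided_for C L.

Lemma L_of_GQ x s : (0 < size x)%N -> (s < T)%N ->
  (forall k, (k < size x)%N -> Qc C T (inpx x) s (Posz k)) -> L x.
Proof.
move=> hx hsT HQ.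
have hT0 : (0 < T)%N by lia.
have [c hc] := global_sat hT0 (ltnW hsT) HQ.
pose w0 : {ffun 'I_s * 'I_(size x) -> bool} :=
  [ffun p : 'I_s * 'I_(size x) => c (val p.1) (Posz (val p.2))].
have hacc : paca_acc_at C x (coins_of w0) s.
  apply/(acc_all C x s (@cwE _ x s w0)) => k hk.
  rewrite (@acc_coins _ C _ _ c).
    case: (classic (bad C (inpx x) s (Posz k))) => hb; first exact: hc.
    by apply/negPn/negP => hn; apply: hb; exists c.
  move=> u y hu hy h1 h2; have [y0 yn] := inpx_some hy.
  rewrite /cw (coins_ofE _ hu yn) ffunE /=; congr c; lia.
apply: NNPP => hL.
have := (proj2 (Hone hx)) hL s; rewrite /paca_prob_within.
set E := [set w : {ffun 'I_s * 'I_(size x) -> bool} | _].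
have hE : (0 < #|E|)%N.
  apply/card_gt0P; exists w0; rewrite inE; apply/existsP; by exists ord_max.
have hN : (0 < #|{: {ffun 'I_s * 'I_(size x) -> bool}}|)%N.
  by apply/card_gt0P; exists w0.
move/eqP; rewrite mulf_eq0 invr_eq0 !pnatr_eq0 -!leqn0 leqNgt hE /= leqNgt hN.
by [].
Qed.

Lemma GQ_of_L x : (0 < size x)%N -> L x ->
  exists2 s, (s < T)%N & forall k, (k < size x)%N -> Qc C T (inpx x) s (Posz k).
Proof.
move=> hx hL; apply: NNPP => hn.
have H : forall s, (s < T)%N -> exists2 k : nat, (k < size x)%N & ~ Qc C T (inpx x) s k.
  move=> s hs; apply: NNPP => hk; apply: hn; exists s => // k hkx.
  by apply: NNPP => hq; apply: hk; exists k.
have [t ht] := (proj1 (Hone hx)) hL (1 / 4) ltac:(lra).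
have := prob_lt (HT (x:=x)) H hx t; lra.
Qed.

End Equiv.
Local Open Scope ring_scope.

Definition pb (P : Prop) : bool := if excluded_middle_informative P then true else false.
Lemma pbP (P : Prop) : pb P <-> P.
Proof. by rewrite /pb; case: excluded_middle_informative. Qed.

Section Daca.
Variables (Sigma : finType) (C : PACA Sigma) (T : nat).

Let W := Ww T.
Let M := (W + T)%N.
Definition dQ' : finType := ('I_M.+1 * {ffun 'I_(2 * W).+1 -> option Sigma})%type.

Definition win0 (a : Sigma) : {ffun 'I_(2 * W).+1 -> option Sigma} :=
  [ffun o : 'I_(2 * W).+1 => if val o == W then Some a else None].

Definition dinp (a : Sigma) : dQ' := (ord0, win0 a).

Lemma dinp_inj : injective dinp.
Proof.
move=> a b [] /ffunP /(_ (inord W)); rewrite !ffunE /= inordK; last by lia.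
by rewrite eqxx => [[]].
Qed.

Definition ddel (l : option dQ') (q : dQ') (r : option dQ') : dQ' :=
  (inord (minn (val q.1).+1 M),
   [ffun o : 'I_(2 * W).+1 =>
      if (val o < W)%N then (if l is Some lq then lq.2 (inord o.+1) else None)
      else if (W < val o)%N then (if r is Some rq then rq.2 (inord o.-1) else None)
      else q.2 o]).

Definition inpw (win : {ffun 'I_(2 * W).+1 -> option Sigma}) (z : int) : option Sigma :=
  if (- (W%:Z) <= z) && (z <= W%:Z) then win (inord (absz (z + W%:Z))) else None.

Definition dac (q : dQ') : bool :=
  (W <= val q.1 < W + T)%N && pb (Qc C T (inpw q.2) (val q.1 - W)%N 0).

Definition CD : DACA Sigma :=
  {| dQ := dQ'; dinput := dinp; dinput_inj := dinp_inj; ddelta := ddel; dacc := dac |}.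

Definition dd : dQ' := (ord0, [ffun => None]).

Lemma inpx_nth (x : seq Sigma) (k : nat) a : (k < size x)%N -> inpx x (Posz k) = Some (nth a x k).
Proof. by move=> hk; rewrite /inpx /= (nth_map a). Qed.

Lemma inpx_out (x : seq Sigma) (z : int) : (z < 0 \/ Posz (size x) <= z) -> inpx x z = None.
Proof.
rewrite /inpx; case: ifP => // h [h1|h1]; first by lia.
rewrite nth_default // size_map; lia.
Qed.

Lemma conf_inv x t : size (daca_conf CD x t) = size x /\ forall k, (k < size x)%N ->
   val (nth dd (daca_conf CD x t) k).1 = minn t M /\
   forall o : 'I_(2 * W).+1, (`|Posz o - W%:Z| <= t)%N ->
     (nth dd (daca_conf CD x t) k).2 o = inpx x (Posz k + Posz o - W%:Z).
Proof.
elim: t => [|t [Hs Hn]].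
  rewrite /daca_conf /=; split; first by rewrite size_map.
  move=> k hk; have [a _] : exists a : Sigma, True by case: (x) hk => [|a ?] //; exists a.
  rewrite (nth_map a) //=; split; first by rewrite minnC minn0.
  move=> o ho; have hoW : nat_of_ord o = W by lia.
  rewrite ffunE /= hoW eqxx.
  have -> : Posz k + Posz W - W%:Z = Posz k by lia.
  by rewrite (@inpx_nth x k a hk).
rewrite /daca_conf iterS -/(daca_conf CD x t) /daca_Delta.
set cf := daca_conf CD x t in Hs Hn *.
split; first by rewrite size_local_step Hs.
move=> k hk; rewrite nth_local_step ?Hs //=.
have [hc hw] := Hn k hk.
split.
  rewrite inordK hc; lia.
move=> o ho; rewrite ffunE /=.
case: (ltnP o W) => h1.
  case: k hk {hc hw} => [|j] hk /=.
    rewrite inpx_out //; left; lia.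
  have [_ hwj] := Hn j (ltnW hk).
  rewrite hwj inordK; try lia.
  by congr inpx; lia.
case: (ltnP W o) => h2.
  case: ifP => h3.
    have [_ hwj] := Hn k.+1 h3.
    have ho1 := ltn_ord o.
    rewrite -subn1 hwj inordK; try lia.
    by congr inpx; lia.
  rewrite inpx_out //; right; lia.
have hoW : nat_of_ord o = W by apply/eqP; rewrite eqn_leq h1 h2.
by rewrite hw // hoW subrr.
Qed.

Lemma inpw_eq x t k : (k < size x)%N -> (W <= t)%N ->
  forall y, 0 - W%:Z <= y -> y <= 0 + W%:Z ->
    inpw (nth dd (daca_conf CD x t) k).2 y = inpx x (y + Posz k).
Proof.
move=> hk hWt y h1 h2.
have [_ Hn] := conf_inv x t; have [_ hw] := Hn k hk.
rewrite /inpw ifT; last by apply/andP; split; lia.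
rewrite hw inordK; try lia.
by congr inpx; lia.
Qed.

Lemma Qc_conf x t k : (k < size x)%N -> (W <= t)%N -> (t < W + T)%N ->
  Qc C T (inpw (nth dd (daca_conf CD x t) k).2) (t - W)%N 0 <->
  Qc C T (inpx x) (t - W)%N (Posz k).
Proof.
move=> hk h1 h2.
rewrite (@Qc_local _ C T _ (fun y => inpx x (y + Posz k))); last first.
- exact: inpw_eq.
- lia.
by rewrite Qc_shift add0r.
Qed.

Lemma dacc_iff x t : (0 < size x)%N -> daca_acc_at CD x t <->
  ((W <= t)%N /\ (t < W + T)%N /\ forall k, (k < size x)%N -> Qc C T (inpx x) (t - W)%N (Posz k)).
Proof.
move=> hx; have [Hs Hn] := conf_inv x t.
rewrite /daca_acc_at; split.
  move/(all_nthP dd) => H.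
  have := H 0%N; rewrite Hs => /(_ hx); rewrite /= /dac => /andP [].
  have [-> _] := Hn 0%N hx => /andP [ha hb] _.
  have h1 : (W <= t)%N by lia.
  have h2 : (t < W + T)%N by move: hb; rewrite /M; lia.
  split => //; split => // k hk.
  have := H k; rewrite Hs => /(_ hk); rewrite /= /dac => /andP [_].
  have [-> _] := Hn k hk; move/pbP.
  have -> : minn t M = t by rewrite /M; lia.
  by move/(Qc_conf hk h1 h2).
move=> [h1 [h2 H]]; apply/(all_nthP dd) => k; rewrite Hs => hk.
rewrite /= /dac; have [-> _] := Hn k hk.
have -> : minn t M = t by rewrite /M; lia.
rewrite h1 h2 /=; apply/pbP; apply/(Qc_conf hk h1 h2); exact: H.
Qed.

End Daca.

Close Scope ring_scope.

Theorem theorem3 (Sigma : finType) (C : PACA Sigma) (L : seq Sigma -> Prop) :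
  paca_const_time C -> one_sided_for C L ->
  exists C' : DACA Sigma, daca_const_time C' /\
    forall x : seq Sigma, 0 < size x -> (L x <-> daca_accepts C' x).
Proof.
move=> [T HT] Hone; exists (CD C T); split.
  exists (Ww T + T) => x [hx [t ht]]; exists t; split => //.
  by have [_ [h _]] := proj1 (dacc_iff C T t hx) ht.
move=> x hx; split.
  move=> hL; have [s hs HQ] := GQ_of_L HT Hone hx hL.
  split => //; exists (s + Ww T); apply/(dacc_iff C T _ hx); split; first lia.
  split; first lia.
  by rewrite addnK.
move=> [_ [t ht]]; have [h1 [h2 H]] := proj1 (dacc_iff C T t hx) ht.
have hs : (t - Ww T < T)%N by lia.
exact: (L_of_GQ Hone hx hs H).
Qed.
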